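(* Let $k\geq 3$ and let $n=4k-3$ be the number of vertices of the basket graph $\mathsf{B}_k$, with distance matrix $D$. Then there exists $\vec x\in\mathbb{R}^n$ such that $$\vec 1^\top\vec x=1,\qquad D\vec x=\frac{(-3)^k+4k-1}{8}\,\vec 1.$$
   Context: For a connected graph $G$ on vertices $v_1,\dots,v_n$, its distance matrix is $D=(d(v_i,v_j))_{i,j=1}^n$, where $d$ is the shortest-path distance; $\vec 1$ denotes the all-ones vector. Basket graph: for $k\geq1$, take disjoint copies of the path graphs $\mathsf{P}_k,\mathsf{P}_{k+1},\mathsf{P}_{k+1},\mathsf{P}_{k+1}$ ($\mathsf{P}_m$ is the path on $m$ vertices), and identify all four first endpoints into one vertex and all four last endpoints into another vertex (creating two vertices of degree four); the result is the $k$-th basket graph $\mathsf{B}_k$, with $4k-3$ vertices. *)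

(* Defs.v *)
From mathcomp Require Import all_boot all_order all_algebra.
From mathcomp Require Import reals.
Set Implicit Arguments. Unset Strict Implicit. Unset Printing Implicit Defensive.
Import GRing.Theory Num.Theory.

Fixpoint ball (T : finType) (e : rel T) (u : T) (m : nat) : {set T} :=
  if m is m'.+1 then ball e u m' :|: [set y | [exists x in ball e u m', e x y]]
  else [set u].

(* shortest-path distance: least m (< #|T|) such that v is within m steps of u.
   For a connected graph on T this is d(u,v). *)
Definition gdist (T : finType) (e : rel T) (u v : T) : nat :=
  find (fun m => v \in ball e u m) (iota 0 #|T|).

Definition distmx (R : pzRingType) (n : nat) (e : rel 'I_n) : 'M[R]_n :=
  \matrix_(i, j) ((gdist e i j)%:R)%R.

(* Basket graph B_k on vertices 0..4k-4: vertex 0 = common first endpoint,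
   vertex 1 = common last endpoint; the interior vertices of the copy of P_k
   are 2..k-1, those of the j-th copy of P_{k+1} (j=0,1,2) are
   k+j(k-1) .. k+j(k-1)+k-2. Each path is listed as a vertex sequence. *)
Definition basket_paths (k : nat) : seq (seq nat) :=
  (0 :: iota 2 (k - 2) ++ [:: 1])
  :: [seq 0 :: iota (k + j * (k - 1)) (k - 1) ++ [:: 1] | j <- iota 0 3].

Definition basket_edges (k : nat) : seq (nat * nat) :=
  flatten [seq zip p (behead p) | p <- basket_paths k].

Definition basket_adj (k : nat) : rel 'I_(4 * k - 3) :=
  fun u v => ((val u, val v) \in basket_edges k) || ((val v, val u) \in basket_edges k).
Arguments basket_adj k : clear implicits.

(* Main.v *)
Require Import Defs.
From mathcomp Require Import all_boot all_order all_algebra.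
From mathcomp Require Import reals.
From mathcomp Require Import zify ring lra.
Import GRing.Theory Num.Theory.
Set Implicit Arguments. Unset Strict Implicit.

Section G.
Variable k : nat.
Hypothesis hk : 3 <= k.
Definition Ln (i : nat) := if i == 0 then k.-1 else k.
Definition absd (p q : nat) := (p - q) + (q - p).
Definition cd (i p j q : nat) : nat :=
  if i == j then absd p q else minn (p + q) ((Ln i - p) + (Ln j - q)).
Definition valid i p := ((i == 0) && (p <= k-1)) || ((1 <= i <= 3) && (1 <= p <= k-1)).

Ltac crushG := rewrite /cd /Ln /absd /valid /= ?eqxx /=; repeat (case: ifP => /eqP ?); lia.

Lemma cd_sym i p j q : cd i p j q = cd j q i p.
Proof. crushG. Qed.
Lemma ext_a i p j : valid i p -> 1 <= j <= 3 -> cd i p j 0 = cd i p 0 0.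
Proof. crushG. Qed.
Lemma ext_b i p j : valid i p -> 1 <= j <= 3 -> cd i p j k = cd i p 0 (k-1).
Proof. crushG. Qed.
Lemma lip_c i p j q : valid i p -> j <= 3 -> q < Ln j ->
  cd i p j q <= (cd i p j q.+1).+1 /\ cd i p j q.+1 <= (cd i p j q).+1.
Proof. rewrite /Ln; crushG. Qed.
Lemma desc_c i p j q : valid i p -> valid j q -> 1 <= q -> q < Ln j -> (i != j) || (p != q) ->
  cd i p j q.-1 < cd i p j q \/ cd i p j q.+1 < cd i p j q.
Proof. crushG. Qed.
Lemma desc_a i p : valid i p -> (i != 0) || (p != 0) -> cd i p i 1 < cd i p 0 0.
Proof. crushG. Qed.
Lemma desc_b i p : valid i p -> (i != 0) || (p != k-1) -> cd i p i (Ln i).-1 < cd i p 0 (k-1).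
Proof. crushG. Qed.
Lemma cd0 i p j q : valid i p -> valid j q -> cd i p j q = 0 -> i = j /\ p = q.
Proof. crushG. Qed.
Lemma cd_le i p j q : valid i p -> valid j q -> cd i p j q <= k.
Proof. crushG. Qed.

Definition cp (v : nat) := if v < k then 0 else if v < 2*k-1 then 1 else if v < 3*k-2 then 2 else 3.
Definition cq (v : nat) := if v == 0 then 0 else if v == 1 then k-1 else
  if v < k then v-1 else if v < 2*k-1 then v-k+1 else if v < 3*k-2 then v-(2*k-1)+1 else v-(3*k-2)+1.
Definition vx i q := if q == 0 then 0 else
  if ((i == 0) && (q == k-1)) || ((i != 0) && (q == k)) then 1 else
  if i == 0 then q+1 else if i == 1 then k + q - 1 else if i == 2 then 2*k - 1 + q - 1
  else 3*k-2+q-1.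
Definition Epath (s n a b : nat) : bool :=
  [|| (a == 0) && (b == s), (s <= a) && (b == a+1) && (b < s + n) | (a == s + n - 1) && (b == 1)].
Definition Enat (a b : nat) : bool :=
  Epath 2 (k-2) a b || (Epath (k + 0*(k-1)) (k-1) a b || (Epath (k + 1*(k-1)) (k-1) a b
   || (Epath (k + 2*(k-1)) (k-1) a b || false))).

Ltac destrG := match goal with |- context [if ?b then _ else _] =>
   lazymatch b with context [if _ then _ else _] => fail | _ =>
     let E := fresh "E" in case E: b; try move/eqP: E => E end end.
Ltac pickrG n := lazymatch n with O => try (apply/orP; left) | S ?m => apply/orP; right; pickrG m end.
Ltac pickG n := rewrite /Enat; lazymatch n with
 | 0 => apply/orP; left; rewrite /Epath; pickrG 0
 | 1 => apply/orP; left; rewrite /Epath; pickrG 1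
 | 2 => apply/orP; left; rewrite /Epath; pickrG 2
 | 3 => apply/orP; right; apply/orP; left; rewrite /Epath; pickrG 0
 | 4 => apply/orP; right; apply/orP; left; rewrite /Epath; pickrG 1
 | 5 => apply/orP; right; apply/orP; left; rewrite /Epath; pickrG 2
 | 6 => apply/orP; right; apply/orP; right; apply/orP; left; rewrite /Epath; pickrG 0
 | 7 => apply/orP; right; apply/orP; right; apply/orP; left; rewrite /Epath; pickrG 1
 | 8 => apply/orP; right; apply/orP; right; apply/orP; left; rewrite /Epath; pickrG 2
 | 9 => apply/orP; right; apply/orP; right; apply/orP; right; apply/orP; left; rewrite /Epath; pickrG 0
 | 10 => apply/orP; right; apply/orP; right; apply/orP; right; apply/orP; left; rewrite /Epath; pickrG 1
 | 11 => apply/orP; right; apply/orP; right; apply/orP; right; apply/orP; left; rewrite /Epath; pickrG 2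
 end.
Ltac crush2G := rewrite /cd /Ln /absd /valid /cp /cq /vx /Enat /Epath /= ?eqxx /=;
   repeat destrG; lia.

Lemma vx_lt j q : j <= 3 -> q <= Ln j -> vx j q < 4*k-3.
Proof. crush2G. Qed.
Lemma cpq_vx j q : valid j q -> cp (vx j q) = j /\ cq (vx j q) = q.
Proof. (case: j => [|[|[|[|j]]]]; crush2G). Qed.
Lemma coordP v : v < 4*k-3 ->
  (v = 0 /\ cp v = 0 /\ cq v = 0) \/ (v = 1 /\ cp v = 0 /\ cq v = k-1) \/
  (2 <= v < k /\ cp v = 0 /\ cq v = v-1) \/
  (k <= v < 2*k-1 /\ cp v = 1 /\ cq v = v-k+1) \/
  (2*k-1 <= v < 3*k-2 /\ cp v = 2 /\ cq v = v-(2*k-1)+1) \/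
  (3*k-2 <= v < 4*k-3 /\ cp v = 3 /\ cq v = v-(3*k-2)+1).
Proof. crush2G. Qed.
Lemma vx_cpq v : v < 4*k-3 -> vx (cp v) (cq v) = v.
Proof. crush2G. Qed.
Lemma valid_cpq v : v < 4*k-3 -> valid (cp v) (cq v).
Proof. crush2G. Qed.
Lemma vx_a j : vx j 0 = 0.
Proof. by rewrite /vx. Qed.
Lemma vx_b j : j <= 3 -> vx j (Ln j) = 1.
Proof. crush2G. Qed.
Lemma adj_line j q : j <= 3 -> q < Ln j -> Enat (vx j q) (vx j q.+1).
Proof.
move=> hj hq.
have : (q = 0) \/ (0 < q /\ q.+1 < Ln j) \/ (q.+1 = Ln j) by lia.
case: j hj hq => [|[|[|[|j]]]] // _ hq; rewrite /Ln /=;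
 (case=> [->|[[h1 h2]|h]]; [ |  | rewrite h]).
- (pickG 0; crush2G).
- (pickG 1; crush2G).
- (pickG 2; crush2G).
- (pickG 3; crush2G).
- (pickG 4; crush2G).
- (pickG 5; crush2G).
- (pickG 6; crush2G).
- (pickG 7; crush2G).
- (pickG 8; crush2G).
- (pickG 9; crush2G).
- (pickG 10; crush2G).
- (pickG 11; crush2G).
Qed.

Lemma edge_inv a b : Enat a b ->
  exists j q, j <= 3 /\ q < Ln j /\ a = vx j q /\ b = vx j q.+1.
Proof.
rewrite /Enat /Epath.
move/orP => [/orP [E|/orP [E|E]] | /orP [/orP [E|/orP [E|E]] | /orP [/orP [E|/orP [E|E]] | /orP [/orP [E|/orP [E|E]] | //]]]];
[exists 0, 0 | exists 0, (a-1) | exists 0, (k-2) | exists 1, 0 | exists 1, (a-k+1) | exists 1, (k-1)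
|exists 2, 0 | exists 2, (a+2-2*k) | exists 2, (k-1) |exists 3, 0 | exists 3, (a+3-3*k) | exists 3, (k-1)];
move: E; crush2G.
Qed.
End G.

Lemma mem_pathE0 x s n y a b : 0 < n ->
  ((a,b) \in zip (x :: iota s n ++ [:: y]) (iota s n ++ [:: y])) =
  [|| (a == x) && (b == s), (s <= a) && (b == a+1) && (b < s + n) | (a == s + n - 1) && (b == y)].
Proof.
elim: n x s => [//|n IH] x s _.
case: n IH => [|n] IH.
  rewrite /= !in_cons !xpair_eqE in_nil; lia.
rewrite [iota _ _]/= [_ :: _ ++ _]/= [zip _ _]/= in_cons xpair_eqE IH //; lia.
Qed.

Lemma mem_pathE s n a b : 0 < n ->
  ((a,b) \in zip (0 :: iota s n ++ [:: 1]) (iota s n ++ [:: 1])) = Epath s n a b.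
Proof. by move=> h; rewrite mem_pathE0. Qed.

Lemma memE k a b : 3 <= k -> ((a,b) \in basket_edges k) = Enat k a b.
Proof.
move=> hk; rewrite /basket_edges /basket_paths.
have -> : iota 0 3 = [:: 0; 1; 2] by [].
rewrite !map_cons /flatten /foldr !mem_cat [behead _]/= [behead _]/= [behead _]/= [behead _]/=.
rewrite !mem_pathE; try lia. by rewrite in_nil.
Qed.

Lemma adjE k (u v : 'I_(4 * k - 3)) : 3 <= k ->
  basket_adj k u v = Enat k (val u) (val v) || Enat k (val v) (val u).
Proof. by move=> hk; rewrite /basket_adj !memE. Qed.




Lemma ball_char (T : finType) (e : rel T) (u : T) (f : T -> nat) :
  (forall v, (f v == 0) = (v == u)) ->
  (forall x y, e x y -> f y <= (f x).+1) ->
  (forall y, 0 < f y -> exists2 x, e x y & f x < f y) ->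
  forall m v, (v \in ball e u m) = (f v <= m).
Proof.
move=> h0 hl hd; elim=> [|m IH] v /=.
  by rewrite in_set1 -h0 leqn0.
rewrite in_setU in_set IH; apply/idP/idP.
  case/orP => [h|/existsP [x /andP [hx exy]]]; first by apply: leqW.
  by move: (hl _ _ exy); rewrite IH in hx; lia.
move=> hv; case: (leqP (f v) m) => [h|hlt]; first by move: h.
apply/orP; right.
have [x exv hx] := hd v (leq_ltn_trans (leq0n m) hlt).
by apply/existsP; exists x; rewrite IH exv andbT; lia.
Qed.

Lemma find_leq a N s : s <= a < s + N -> find (fun m => a <= m) (iota s N) = a - s.
Proof.
elim: N s => [|N IH] s h; first lia.
rewrite /=; case: ifP => h1; first lia.
rewrite IH; lia.
Qed.

Lemma gdist_char (T : finType) (e : rel T) (u : T) (f : T -> nat) :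
  (forall v, (f v == 0) = (v == u)) ->
  (forall x y, e x y -> f y <= (f x).+1) ->
  (forall y, 0 < f y -> exists2 x, e x y & f x < f y) ->
  forall v, f v < #|T| -> gdist e u v = f v.
Proof.
move=> h0 hl hd v hv; rewrite /gdist.
rewrite (eq_find (a2 := fun m => f v <= m)); last by move=> m; rewrite (ball_char h0 hl hd).
rewrite find_leq ?subn0 //; lia.
Qed.

Lemma fvx k i p j q : 3 <= k -> valid k i p -> j <= 3 -> q <= Ln k j ->
  cd k i p (cp k (vx k j q)) (cq k (vx k j q)) = cd k i p j q.
Proof.
move=> hk hv hj hq.
have [->|q0] := eqVneq q 0.
  rewrite vx_a /cp /cq /=; have -> : (0 < k) by lia.
  case: (eqVneq j 0) => [->//|j0]; rewrite (ext_a hk) //; lia.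
have [jq|njq] := boolP ((j != 0) && (q == k)).
  case/andP: jq => j0 /eqP qk; subst q.
  have Lj : Ln k j = k by rewrite /Ln (negPf j0).
  have -> : vx k j k = 1 by have := vx_b hk hj; rewrite Lj.
  rewrite /cp /cq /=; have -> : (1 < k) by lia.
  rewrite (ext_b hk) //; lia.
have hv2 : valid k j q by move: njq hq q0; rewrite /valid /Ln; case: ifP => /eqP; lia.
by case: (cpq_vx hk hv2) => -> ->.
Qed.

Lemma gdist_basket k (u v : 'I_(4 * k - 3)) : 3 <= k ->
  gdist (basket_adj k) u v = cd k (cp k u) (cq k u) (cp k v) (cq k v).
Proof.
move=> hk.
have hU := valid_cpq hk (ltn_ord u).
set i := cp k u in hU *; set p := cq k u in hU *.
apply: (gdist_char (f := fun v : 'I_(4*k-3) => cd k i p (cp k v) (cq k v))).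
- move=> w /=; apply/idP/idP.
    move/eqP => h0; have [e1 e2] := cd0 hk hU (valid_cpq hk (ltn_ord w)) h0.
    apply/eqP/val_inj => /=.
    by rewrite -(vx_cpq hk (ltn_ord w)) -(vx_cpq hk (ltn_ord u)) -e1 -e2.
  by move/eqP => ->; rewrite /cd eqxx /absd subnn.
- move=> x y; rewrite adjE // => /orP [] /(edge_inv hk) [j [q [hj [hq [ex ey]]]]];
  rewrite ex ey !fvx //; try lia; have := lip_c hk hU hj hq; lia.
- move=> y hy.
  have hV := valid_cpq hk (ltn_ord y).
  set j := cp k y in hV hy *; set q := cq k y in hV hy *.
  have yE : val y = vx k j q by rewrite vx_cpq.
  have hi3 : i <= 3 by move: hU; rewrite /valid; lia.
  have hj3 : j <= 3 by move: hV; rewrite /valid; lia.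
  have hLi : 1 < Ln k i by rewrite /Ln; case: ifP; lia.
  have hLj : 1 < Ln k j by rewrite /Ln; case: ifP; lia.
  have [q0|q0] := eqVneq q 0.
    have j0 : j = 0 by move: hV; rewrite /valid q0; lia.
    have hw : vx k i 1 < 4 * k - 3 by apply: vx_lt; lia.
    exists (Ordinal hw).
      rewrite adjE //= yE q0 vx_a; apply/orP; right.
      by rewrite -[vx k i 1]/(vx k i 0.+1) -(vx_a k i); apply: adj_line; lia.
    rewrite /= fvx //; last lia.
    move: hy; rewrite q0 j0 => hy.
    apply: desc_a => //; rewrite -negb_and; apply/negP => /andP [/eqP i0 /eqP p0].
    by move: hy; rewrite i0 p0 /cd eqxx /absd subnn.
  have [qL|qL] := eqVneq q (Ln k j).
    have j0 : j = 0 by move: hV qL; rewrite /valid /Ln; case: ifP; lia.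
    have hw : vx k i (Ln k i).-1 < 4 * k - 3 by apply: vx_lt; lia.
    exists (Ordinal hw).
      have yb : val y = 1 by rewrite yE qL j0; apply: vx_b.
      have := adj_line hk (j:=i) (q:=(Ln k i).-1) hi3; rewrite prednK; last lia.
      rewrite (vx_b hk hi3) => H; rewrite adjE //= yb H //; lia.
    rewrite /= fvx //; last lia.
    have qk : q = k - 1 by move: qL; rewrite j0 /Ln /=; lia.
    move: hy; rewrite j0 qk => hy.
    apply: desc_b => //; rewrite -negb_and; apply/negP => /andP [/eqP i0 /eqP p0].
    by move: hy; rewrite i0 p0 /cd eqxx /absd subnn.
  have hq1 : 1 <= q by lia.
  have hq2 : q < Ln k j by move: hV qL; rewrite /valid /Ln; case: ifP; lia.
  have hne : (i != j) || (p != q).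
    rewrite -negb_and; apply/negP => /andP [/eqP e1 /eqP e2].
    by move: hy; rewrite e1 e2 /cd eqxx /absd subnn.
  case: (desc_c hk hU hV hq1 hq2 hne) => hd.
    have hw : vx k j q.-1 < 4 * k - 3 by apply: vx_lt; lia.
    exists (Ordinal hw); last by rewrite /= fvx //; lia.
    rewrite adjE //= yE; apply/orP; left.
    by rewrite -{2}(prednK hq1); apply: adj_line; lia.
  have hw : vx k j q.+1 < 4 * k - 3 by apply: vx_lt; lia.
  exists (Ordinal hw); last by rewrite /= fvx //; lia.
  rewrite adjE //= yE; apply/orP; right; apply: adj_line; lia.
- rewrite card_ord; have := cd_le hk hU (valid_cpq hk (ltn_ord v)); lia.
Qed.

Section P.
Variable k : nat.
Hypothesis hk : 3 <= k.
Ltac destrP := match goal with |- context [if ?b then _ else _] =>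
   lazymatch b with context [if _ then _ else _] => fail | _ =>
     let E := fresh "E" in case E: b; try move/eqP: E => E end end.
Ltac crushP := rewrite /cd /Ln /absd /= ?eqxx /=; repeat destrP; lia.

Lemma pw_S0_long j p q : 1 <= j <= 3 -> 1 <= p <= k-1 -> q < k ->
  cd k j (p-1) 0 q + cd k j p.+1 0 q + ((q == k-1-p) + (q == k-p)) = 2 * cd k j p 0 q + 0.
Proof. crushP. Qed.
Lemma pw_SL_same j p t : 1 <= j <= 3 -> 1 <= p <= k-1 -> t < k-1 ->
  cd k j (p-1) j t.+1 + cd k j p.+1 j t.+1 + 0 = 2 * cd k j p j t.+1 + 2 * (t == p-1).
Proof. crushP. Qed.
Lemma pw_SL_other j J p t : 1 <= j <= 3 -> 1 <= J <= 3 -> j != J -> 1 <= p <= k-1 -> t < k-1 ->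
  cd k j (p-1) J t.+1 + cd k j p.+1 J t.+1 + 2 * (t == k-p-1) = 2 * cd k j p J t.+1 + 0.
Proof. crushP. Qed.
Lemma pw_S0_short p q : 1 <= p <= k-2 -> q < k ->
  cd k 0 (p-1) 0 q + cd k 0 p.+1 0 q + 0 = 2 * cd k 0 p 0 q + 2 * (q == p).
Proof. crushP. Qed.
Lemma pw_SL_short J p t : 1 <= J <= 3 -> 1 <= p <= k-2 -> t < k-1 ->
  cd k 0 (p-1) J t.+1 + cd k 0 p.+1 J t.+1 + ((t == k-2-p) + (t == k-1-p)) = 2 * cd k 0 p J t.+1 + 0.
Proof. crushP. Qed.
Lemma pw_a0 q : cd k 0 0 0 q = q.
Proof. crushP. Qed.
Lemma pw_aL J t : 1 <= J <= 3 -> t < k-1 -> cd k 0 0 J t.+1 = t.+1.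
Proof. crushP. Qed.
Lemma pw_b0 q : q < k -> cd k 0 (k-1) 0 q = k-1-q.
Proof. crushP. Qed.
Lemma pw_bL J t : 1 <= J <= 3 -> t < k-1 -> cd k 0 (k-1) J t.+1 = k-1-t.
Proof. crushP. Qed.
Lemma pw_ha j J Q : 1 <= j <= 3 -> valid k J Q -> cd k j 0 J Q = cd k 0 0 J Q.
Proof. rewrite /valid; crushP. Qed.
Lemma pw_hb j J Q : 1 <= j <= 3 -> valid k J Q -> cd k j k J Q = cd k 0 (k-1) J Q.
Proof. rewrite /valid; crushP. Qed.
End P.

Local Open Scope ring_scope.

Section A.
Variable R : realType.

Lemma sum_ind n t (w : nat -> R) : (t < n)%N ->
  \sum_(0 <= q < n) (q == t)%:R * w q = w t.
Proof.
elim: n => [//|n IH] ht.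
rewrite big_nat_recr //=.
have [tn|tn] := eqVneq n t.
  subst t; rewrite mul1r big1_seq ?add0r // => q; rewrite mem_index_iota => /andP [_ hq].
  by rewrite (ltn_eqF hq) mul0r.
rewrite IH; last by lia.
by rewrite mul0r addr0.
Qed.

Lemma sum0 n (w : nat -> R) : \sum_(0 <= q < n) (0%N)%:R * w q = 0.
Proof. by rewrite big1 // => q _; rewrite mul0r. Qed.

Lemma sum_indm n m t (w : nat -> R) : (t < n)%N ->
  \sum_(0 <= q < n) (m * (q == t))%:R * w q = m%:R * w t.
Proof.
move=> ht; rewrite -(sum_ind w ht) mulr_sumr; apply: eq_bigr => q _.
by rewrite natrM mulrA.
Qed.

Lemma sum_ind2 n t1 t2 (w : nat -> R) : (t1 < n)%N -> (t2 < n)%N ->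
  \sum_(0 <= q < n) ((q == t1) + (q == t2))%:R * w q = w t1 + w t2.
Proof.
move=> h1 h2; rewrite -(sum_ind w h1) -(sum_ind w h2) -big_split; apply: eq_bigr => q _.
by rewrite natrD mulrDl.
Qed.

Lemma dsum n (a b c P N : nat -> nat) (w : nat -> R) :
  (forall q, (q < n)%N -> (a q + b q + N q = 2 * c q + P q)%N) ->
  \sum_(0 <= q < n) (a q)%:R * w q + \sum_(0 <= q < n) (b q)%:R * w q =
  2 * \sum_(0 <= q < n) (c q)%:R * w q + \sum_(0 <= q < n) (P q)%:R * w q
    - \sum_(0 <= q < n) (N q)%:R * w q.
Proof.
move=> H.
rewrite -big_split mulr_sumr -big_split -sumrB /=.
apply: eq_big_nat => q hq.
have e : (a q)%:R + (b q)%:R + (N q)%:R = 2 * (c q)%:R + (P q)%:R :> R.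
  have e0 : (a q + b q + N q)%:R = (2 * c q + P q)%:R :> R by rewrite H // (andP hq).2.
  by move: e0; rewrite !natrD => ->; ring.
have -> : (a q)%:R * w q + (b q)%:R * w q =
   ((a q)%:R + (b q)%:R + (N q)%:R) * w q - (N q)%:R * w q :> R by ring.
rewrite e; ring.
Qed.

Definition r : R := -3.

Lemma geo m : \sum_(0 <= q < m) r ^+ q = (1 - r ^+ m) / 4.
Proof.
elim: m => [|m IH]; first by rewrite big_geq // expr0 subrr mul0r.
by rewrite big_nat_recr //= IH exprS /r; field.
Qed.

Lemma symsum m (h : nat -> R) C : (forall q, (q < m)%N -> h q + h (m - 1 - q)%N = C) ->
  \sum_(0 <= q < m) h q * (r ^+ q + r ^+ (m - 1 - q)%N) = C * \sum_(0 <= q < m) r ^+ q.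
Proof.
move=> H.
have E : \sum_(0 <= q < m) h q * r ^+ (m - 1 - q)%N = \sum_(0 <= q < m) h (m - 1 - q)%N * r ^+ q.
  rewrite big_nat_rev /=. apply: eq_big_nat => q hq.
  have e1 : (0 + m - q.+1 = m - 1 - q)%N by lia.
  have e2 : (m - 1 - (m - 1 - q) = q)%N by lia.
  by rewrite e1 e2.
under eq_bigr do rewrite mulrDr.
rewrite big_split /= E -big_split mulr_sumr; apply: eq_big_nat => q hq.
by rewrite /= -mulrDl H //; case/andP: hq.
Qed.
End A.

Local Open Scope ring_scope.

Section A2.
Variable R : realType.
Variable k : nat.
Hypothesis hk : (3 <= k)%N.

Definition ys (q : nat) : R := (r R ^+ q + r R ^+ (k - 1 - q)%N) / 2.
Definition yl (t : nat) : R := (r R ^+ t + r R ^+ (k - 1 - 1 - t)%N) / 2.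
Definition S0 i p := \sum_(0 <= q < k) (cd k i p 0 q)%:R * ys q.
Definition SL i p J := \sum_(0 <= t < (k - 1)%N) (cd k i p J t.+1)%:R * yl t.
Definition FF i p := S0 i p + SL i p 1 + SL i p 2 + SL i p 3.

Lemma dS0_long j p : (1 <= j <= 3)%N -> (1 <= p <= k - 1)%N ->
  S0 j (p - 1) + S0 j p.+1 = 2 * S0 j p - (ys (k - 1 - p) + ys (k - p)).
Proof.
move=> hj hp; rewrite /S0.
rewrite (@dsum R k (fun q => cd k j (p-1) 0 q) (fun q => cd k j p.+1 0 q) (fun q => cd k j p 0 q)
   (fun _ => 0%N) (fun q => (q == k-1-p) + (q == k-p))%N ys); last first.
  by move=> q hq; apply: pw_S0_long.
rewrite sum0 sum_ind2; [ring | lia | lia].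
Qed.

Lemma dSL_same j p : (1 <= j <= 3)%N -> (1 <= p <= k - 1)%N ->
  SL j (p - 1) j + SL j p.+1 j = 2 * SL j p j + 2 * yl (p - 1).
Proof.
move=> hj hp; rewrite /SL.
rewrite (@dsum R (k-1) (fun q => cd k j (p-1) j q.+1) (fun q => cd k j p.+1 j q.+1) (fun q => cd k j p j q.+1)
   (fun q => 2 * (q == p - 1))%N (fun _ => 0%N) yl); last first.
  by move=> q hq; apply: pw_SL_same.
rewrite sum0 sum_indm; [ring | lia].
Qed.

Lemma dSL_other j J p : (1 <= j <= 3)%N -> (1 <= J <= 3)%N -> j != J -> (1 <= p <= k - 1)%N ->
  SL j (p - 1) J + SL j p.+1 J = 2 * SL j p J - 2 * yl (k - p - 1).
Proof.
move=> hj hJ hjJ hp; rewrite /SL.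
rewrite (@dsum R (k-1) (fun q => cd k j (p-1) J q.+1) (fun q => cd k j p.+1 J q.+1) (fun q => cd k j p J q.+1)
   (fun _ => 0%N) (fun q => 2 * (q == k - p - 1))%N yl); last first.
  by move=> q hq; apply: pw_SL_other.
rewrite sum0 sum_indm; [ring | lia].
Qed.

Lemma dS0_short p : (1 <= p <= k - 2)%N ->
  S0 0 (p - 1) + S0 0 p.+1 = 2 * S0 0 p + 2 * ys p.
Proof.
move=> hp; rewrite /S0.
rewrite (@dsum R k (fun q => cd k 0 (p-1) 0 q) (fun q => cd k 0 p.+1 0 q) (fun q => cd k 0 p 0 q)
   (fun q => 2 * (q == p))%N (fun _ => 0%N) ys); last first.
  by move=> q hq; apply: pw_S0_short.
rewrite sum0 sum_indm; [ring | lia].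
Qed.

Lemma dSL_short J p : (1 <= J <= 3)%N -> (1 <= p <= k - 2)%N ->
  SL 0 (p - 1) J + SL 0 p.+1 J = 2 * SL 0 p J - (yl (k - 2 - p) + yl (k - 1 - p)).
Proof.
move=> hJ hp; rewrite /SL.
rewrite (@dsum R (k-1) (fun q => cd k 0 (p-1) J q.+1) (fun q => cd k 0 p.+1 J q.+1) (fun q => cd k 0 p J q.+1)
   (fun _ => 0%N) (fun q => (q == k - 2 - p) + (q == k - 1 - p))%N yl); last first.
  by move=> q hq; apply: pw_SL_short.
rewrite sum0 sum_ind2; [ring | lia | lia].
Qed.

Lemma rpow_pred n : (0 < n)%N -> r R ^+ n = r R * r R ^+ (n - 1).
Proof. by move=> hn; rewrite -exprS; congr (_ ^+ _); lia. Qed.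

Lemma id_long p : (1 <= p <= k - 1)%N ->
  2 * yl (p - 1) - 2 * yl (k - p - 1) - 2 * yl (k - p - 1) - (ys (k - 1 - p) + ys (k - p)) = 0.
Proof.
move=> hp; rewrite /yl /ys.
have -> : (k - 1 - 1 - (p - 1) = k - 1 - p)%N by lia.
have -> : (k - p - 1 = k - 1 - p)%N by lia.
have -> : (k - 1 - 1 - (k - 1 - p) = p - 1)%N by lia.
have -> : (k - 1 - (k - 1 - p) = p)%N by lia.
have -> : (k - 1 - (k - p) = p - 1)%N by lia.
rewrite (rpow_pred (n := p)); last lia.
rewrite (rpow_pred (n := (k - p)%N)); last lia.
have -> : (k - p - 1 = k - 1 - p)%N by lia.
rewrite /r; lra.
Qed.

Lemma id_short p : (1 <= p <= k - 2)%N ->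
  2 * ys p - 3 * (yl (k - 2 - p) + yl (k - 1 - p)) = 0.
Proof.
move=> hp; rewrite /yl /ys.
have -> : (k - 1 - 1 - (k - 2 - p) = p)%N by lia.
have -> : (k - 1 - 1 - (k - 1 - p) = p - 1)%N by lia.
rewrite (rpow_pred (n := p)); last lia.
rewrite (rpow_pred (n := (k - 1 - p)%N)); last lia.
have -> : (k - 1 - p - 1 = k - 2 - p)%N by lia.
rewrite /r; lra.
Qed.
End A2.

Local Open Scope ring_scope.

Section A3.
Variable R : realType.
Variable k : nat.
Hypothesis hk : (3 <= k)%N.

Notation ys := (@ys R k).
Notation yl := (@yl R k).
Notation S0 := (@S0 R k).
Notation SL := (@SL R k).
Notation FF := (@FF R k).

Lemma ys_sum (h : nat -> R) C : (forall q, (q < k)%N -> h q + h (k - 1 - q)%N = C) ->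
  \sum_(0 <= q < k) h q * ys q = C / 2 * ((1 - r R ^+ k) / 4).
Proof.
move=> H; transitivity ((C * \sum_(0 <= q < k) r R ^+ q) / 2); last by rewrite geo; ring.
rewrite -(symsum H) mulr_suml; apply: eq_bigr => q _; by rewrite /ys mulrA.
Qed.

Lemma yl_sum (h : nat -> R) C : (forall q, (q < k - 1)%N -> h q + h (k - 1 - 1 - q)%N = C) ->
  \sum_(0 <= q < (k-1)%N) h q * yl q = C / 2 * ((1 - r R ^+ (k - 1)) / 4).
Proof.
move=> H; transitivity ((C * \sum_(0 <= q < (k-1)%N) r R ^+ q) / 2); last by rewrite geo; ring.
rewrite -(symsum H) mulr_suml; apply: eq_bigr => q _; by rewrite /yl mulrA.
Qed.

Definition cval : R := ((-3) ^+ k + (4 * k)%:R - 1) / 8.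

Lemma rk : r R ^+ k = r R * r R ^+ (k - 1).
Proof. by rewrite -exprS; congr (_ ^+ _); lia. Qed.

Lemma S0_a : S0 0 0 = (k - 1)%:R / 2 * ((1 - r R ^+ k) / 4).
Proof.
rewrite -(ys_sum (h := fun q => q%:R)); last first.
  by move=> q hq; rewrite -natrD; congr (_%:R); lia.
by apply: eq_big_nat => q hq; rewrite pw_a0.
Qed.

Lemma SL_a J : (1 <= J <= 3)%N -> SL 0 0 J = k%:R / 2 * ((1 - r R ^+ (k - 1)) / 4).
Proof.
move=> hJ; rewrite -(yl_sum (h := fun q => q.+1%:R)); last first.
  by move=> q hq; rewrite -natrD; congr (_%:R); lia.
by apply: eq_big_nat => q hq; rewrite pw_aL //; case/andP: hq.
Qed.

Lemma S0_b : S0 0 (k - 1) = (k - 1)%:R / 2 * ((1 - r R ^+ k) / 4).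
Proof.
rewrite -(ys_sum (h := fun q => (k - 1 - q)%:R)); last first.
  by move=> q hq; rewrite -natrD; congr (_%:R); lia.
by apply: eq_big_nat => q hq; rewrite pw_b0 //; case/andP: hq.
Qed.

Lemma SL_b J : (1 <= J <= 3)%N -> SL 0 (k - 1) J = k%:R / 2 * ((1 - r R ^+ (k - 1)) / 4).
Proof.
move=> hJ; rewrite -(yl_sum (h := fun q => (k - 1 - q)%:R)); last first.
  by move=> q hq; rewrite -natrD; congr (_%:R); lia.
by apply: eq_big_nat => q hq; rewrite pw_bL //; case/andP: hq.
Qed.

Lemma cval_eq : (k - 1)%:R / 2 * ((1 - r R ^+ k) / 4) + 3 * (k%:R / 2 * ((1 - r R ^+ (k - 1)) / 4)) = cval.
Proof.
rewrite /cval rk natrB; last lia.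
by rewrite natrM /r; field.
Qed.

Lemma FF_a : FF 0 0 = cval.
Proof. rewrite /FF S0_a !SL_a // -cval_eq; ring. Qed.

Lemma FF_b : FF 0 (k - 1) = cval.
Proof. rewrite /FF S0_b !SL_b // -cval_eq; ring. Qed.

Lemma sum_y : \sum_(0 <= q < k) ys q + 3 * \sum_(0 <= t < (k-1)%N) yl t = 1.
Proof.
have E1 : \sum_(0 <= q < k) ys q = 2 / 2 * ((1 - r R ^+ k) / 4).
  rewrite -(ys_sum (h := fun _ => 1)); last by move=> *; ring.
  by apply: eq_bigr => *; rewrite mul1r.
have E2 : \sum_(0 <= q < (k-1)%N) yl q = 2 / 2 * ((1 - r R ^+ (k-1)) / 4).
  rewrite -(yl_sum (h := fun _ => 1)); last by move=> *; ring.
  by apply: eq_bigr => *; rewrite mul1r.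
by rewrite E1 E2 rk /r; field.
Qed.
End A3.

Local Open Scope ring_scope.

Lemma line (R : realType) (f : nat -> R) L c : (0 < L)%N -> f 0%N = c -> f L = c ->
  (forall p, (0 < p < L)%N -> f (p - 1)%N + f p.+1 = 2 * f p) ->
  forall p, (p <= L)%N -> f p = c.
Proof.
move=> hL h0 hLc hd.
set d := f 1%N - f 0%N.
have key : forall p, (p.+1 <= L)%N -> f p = f 0%N + p%:R * d /\ f p.+1 = f 0%N + p.+1%:R * d.
  elim=> [|p IH] hp.
    by split; [rewrite mul0r addr0 | rewrite mul1r /d; ring].
  have [e1 e2] := IH (ltnW hp).
  split => //.
  have hp2 : (0 < p.+1 < L)%N by lia.
  have := hd p.+1 hp2; rewrite (_ : (p.+1 - 1 = p)%N); last lia.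
  move=> h.
  have -> : f p.+2 = 2 * f p.+1 - f p by rewrite -h; ring.
  rewrite e1 e2 -[p.+2]addn2 -[p.+1]addn1 !natrD; ring.
have hd0 : d = 0.
  have hL1 : (L.-1.+1 <= L)%N by lia.
  have [_ e] := key _ hL1.
  move: e; rewrite prednK // hLc h0 => e.
  have : L%:R * d = 0 :> R by lra.
  case/eqP; rewrite mulf_eq0 pnatr_eq0; case/orP => [/eqP hL0|/eqP //]; lia.
move=> p hp.
have [->|hpL] := eqVneq p L; first exact: hLc.
have hp1 : (p.+1 <= L)%N by lia.
have [e1 _] := key p hp1.
by rewrite e1 hd0 mulr0 addr0.
Qed.

Section A4.
Variable R : realType.
Variable k : nat.
Hypothesis hk : (3 <= k)%N.
Notation FF := (@FF R k).

Lemma FF_long j p : (1 <= j <= 3)%N -> (1 <= p <= k - 1)%N ->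
  FF j (p - 1) + FF j p.+1 = 2 * FF j p.
Proof.
move=> hj hp; rewrite /FF.
have h0 := dS0_long R hk hj hp.
have hid := id_long R hk hp.
have : (j = 1 \/ j = 2 \/ j = 3)%N by lia.
case=> [E|[E|E]]; subst j.
- have h1 := dSL_same R hk (j:=1) (isT : (1 <= 1 <= 3)%N) hp.
  have h2 := dSL_other R hk (j:=1) (J:=2) isT isT isT hp.
  have h3 := dSL_other R hk (j:=1) (J:=3) isT isT isT hp.
  lra.
- have h1 := dSL_same R hk (j:=2) (isT : (1 <= 2 <= 3)%N) hp.
  have h2 := dSL_other R hk (j:=2) (J:=1) isT isT isT hp.
  have h3 := dSL_other R hk (j:=2) (J:=3) isT isT isT hp.
  lra.
- have h1 := dSL_same R hk (j:=3) (isT : (1 <= 3 <= 3)%N) hp.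
  have h2 := dSL_other R hk (j:=3) (J:=1) isT isT isT hp.
  have h3 := dSL_other R hk (j:=3) (J:=2) isT isT isT hp.
  lra.
Qed.

Lemma FF_short p : (1 <= p <= k - 2)%N ->
  FF 0 (p - 1) + FF 0 p.+1 = 2 * FF 0 p.
Proof.
move=> hp; rewrite /FF.
have h0 := dS0_short R hk hp.
have hid := id_short R hk hp.
have h1 := dSL_short R hk (J:=1) isT hp.
have h2 := dSL_short R hk (J:=2) isT hp.
have h3 := dSL_short R hk (J:=3) isT hp.
lra.
Qed.

Lemma FF_hub_a j : (1 <= j <= 3)%N -> FF j 0 = FF 0 0.
Proof.
move=> hj; rewrite /FF /S0 /SL.
congr (_ + _ + _ + _); apply: eq_big_nat => q hq; rewrite pw_ha //; rewrite /valid; lia.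
Qed.

Lemma FF_hub_b j : (1 <= j <= 3)%N -> FF j k = FF 0 (k - 1).
Proof.
move=> hj; rewrite /FF /S0 /SL.
congr (_ + _ + _ + _); apply: eq_big_nat => q hq; rewrite pw_hb //; rewrite /valid; lia.
Qed.

Lemma FF_valid i p : valid k i p -> FF i p = cval R k.
Proof.
rewrite /valid => /orP [/andP [/eqP -> hp] | /andP [hi hp]].
  apply: (line (f := FF 0) (L := (k - 1)%N)) => //; first lia.
  - exact: FF_a.
  - exact: FF_b.
  - move=> q hq; apply: FF_short; lia.
apply: (line (f := FF i) (L := k)) => //; first lia.
- by rewrite FF_hub_a // FF_a.
- by rewrite FF_hub_b // FF_b.
- move=> q hq; apply: FF_long => //; lia.
- lia.
Qed.
End A4.

Local Open Scope ring_scope.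

Ltac destrM := match goal with |- context [if ?b then _ else _] =>
   lazymatch b with context [if _ then _ else _] => fail | _ =>
     let E := fresh "E" in case E: b; try move/eqP: E => E end end.

Section M.
Variable R : realType.

Lemma shift_sum a m (F : nat -> R) :
  \sum_(a <= v < a + m) F v = \sum_(0 <= i < m) F (i + a).
Proof. by rewrite -{1}(add0n a) big_addn addKn. Qed.

Lemma block0 n (G : nat -> R) (f : nat -> nat) : (2 <= n)%N ->
  f 0%N = 0%N -> f 1%N = n.-1 -> (forall v, (2 <= v < n)%N -> f v = v.-1) ->
  \sum_(0 <= v < n) G (f v) = \sum_(0 <= q < n) G q.
Proof.
move=> hn f0 f1 fv.
rewrite big_ltn; last lia. rewrite big_ltn; last lia.
rewrite [RHS]big_ltn; last lia.
have hn0 : (0 < n)%N by lia.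
have R1 : \sum_(1 <= q < n) G q = \sum_(1 <= q < n.-1) G q + G n.-1.
  by rewrite -[in LHS](prednK hn0) big_nat_recr //=; lia.
rewrite R1.
rewrite f0 f1 (big_add1 _ _ 1%N) /=.
rewrite (eq_big_nat _ _ (F2 := fun i => G i)); last first.
  by move=> i hi; rewrite fv //=; lia.
rewrite /=; ring.
Qed.

Lemma sum_verts k (g : nat -> nat -> R) : (3 <= k)%N ->
  \sum_(0 <= v < 4 * k - 3) g (cp k v) (cq k v) =
  \sum_(0 <= q < k) g 0%N q + \sum_(0 <= t < (k-1)%N) g 1%N t.+1
  + \sum_(0 <= t < (k-1)%N) g 2%N t.+1 + \sum_(0 <= t < (k-1)%N) g 3%N t.+1.
Proof.
move=> hk.
rewrite (big_cat_nat _ (n := k)); [|lia|lia].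
rewrite (big_cat_nat _ (m := k) (n := (k + (k - 1))%N)); [|lia|lia].
rewrite (big_cat_nat _ (m := (k + (k - 1))%N) (n := (k + (k - 1) + (k - 1))%N)); [|lia|lia].
have e : (4 * k - 3 = k + (k - 1) + (k - 1) + (k - 1))%N by lia.
rewrite e (shift_sum k) (shift_sum (k + (k - 1))%N) (shift_sum (k + (k - 1) + (k - 1))%N).
have B0 : \sum_(0 <= v < k) g (cp k v) (cq k v) = \sum_(0 <= q < k) g 0%N q.
  rewrite (eq_big_nat _ _ (F2 := fun v => g 0%N (cq k v))); last first.
    move=> v hv; congr (g _ _); rewrite /cp; repeat destrM; lia.
  apply: (@block0 k (g 0%N) (cq k)); [lia | by rewrite /cq | rewrite /cq /=; lia | ].
  move=> v hv; rewrite /cq; repeat destrM; lia.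
rewrite B0 /= !addrA; congr (_ + _ + _ + _); apply: eq_big_nat => i hi; congr (g _ _);
  rewrite /cp /cq; repeat destrM; lia.
Qed.

Definition Y k (i p : nat) : R := if i == 0%N then ys R k p else yl R k (p - 1).

Theorem main (k : nat) (hk : (3 <= k)%N) :
  exists x : 'cV[R]_(4 * k - 3),
    (const_mx 1)^T *m x = 1%:M /\
    distmx R (basket_adj k) *m x
      = (((-3) ^+ k + (4 * k)%:R - 1) / 8) *: const_mx 1.
Proof.
exists (\col_(v < 4 * k - 3) Y k (cp k v) (cq k v)).
split.
  apply/matrixP => a b; rewrite !mxE (ord1 a) (ord1 b) /=.
  under eq_bigr do rewrite !mxE mul1r.
  rewrite -(big_mkord xpredT (fun v => Y k (cp k v) (cq k v))) sum_verts //.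
  rewrite /Y /= -(sum_y R hk).
  have E : \sum_(0 <= t < (k - 1)%N) yl R k (t.+1 - 1) = \sum_(0 <= t < (k - 1)%N) yl R k t.
    by apply: eq_bigr => t _; rewrite subn1.
  rewrite E; ring.
apply/matrixP => a b; rewrite !mxE (ord1 b) mulr1.
under eq_bigr do rewrite !mxE gdist_basket //.
rewrite -(big_mkord xpredT (fun v => (cd k (cp k a) (cq k a) (cp k v) (cq k v))%:R * Y k (cp k v) (cq k v))).
rewrite (@sum_verts k (fun J Q => (cd k (cp k a) (cq k a) J Q)%:R * Y k J Q)) //.
rewrite -[RHS]/(cval R k).
rewrite -(FF_valid R hk (valid_cpq hk (ltn_ord a))) /FF /S0 /SL /Y /=.
have E : forall J, \sum_(0 <= t < (k - 1)%N) (cd k (cp k a) (cq k a) J t.+1)%:R * yl R k (t.+1 - 1)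
     = \sum_(0 <= t < (k - 1)%N) (cd k (cp k a) (cq k a) J t.+1)%:R * yl R k t.
  by move=> J; apply: eq_bigr => t _; rewrite subn1.
by rewrite !E.
Qed.
End M.


Unset Implicit Arguments.
Local Open Scope ring_scope.

Theorem lemma2p2 (R : realType) (k : nat) (hk : (3 <= k)%N) :
  exists x : 'cV[R]_(4 * k - 3),
    (const_mx 1)^T *m x = 1%:M /\
    distmx R (basket_adj k) *m x
      = (((-3) ^+ k + (4 * k)%:R - 1) / 8) *: const_mx 1.
Proof. exact: (main R hk). Qed.
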